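(* Let $G$ be a graph and $k=k(G)>0$ such that every unit-weighted graph $H$ satisfies $$\mathsf{inter}^*_G(H)=\mathsf{inter}_G(H)\ge|E(H)|-k|V(H)|-k^2.$$ Then every unit-weighted graph $H$ satisfies $$\mathsf{inter}_G(H)\ge\frac1{27}\frac{|E(H)|^3}{k^2|V(H)|^2}-k|V(H)|,$$ so that $\mathsf{inter}_G$ is a $(27k^2,k)$-congestion measure.
   Context: Let $G=(V,E)$; $\mathcal P_{uv}$ is the set of paths in $G$ between $u,v$. A flow is $F:\bigcup\mathcal P_{uv}\to[0,\infty)$ with $F[u,v]=\sum_{p\in\mathcal P_{uv}}F(p)$; it is integral if for each $u,v$ it is supported on at most one path of $\mathcal P_{uv}$. $\mathsf{inter}(F)=\sum_{(u,v,u',v'):|\{u,v,u',v'\}|=4}\sum_{p\in\mathcal P_{uv},p'\in\mathcal P_{u'v'}}\sum_{x\in p\cap p'}F(p)F(p')$. For a graph $H$ with edge weights $w$, an $H$-flow in $G$ is a flow $F$ with an injective $\phi:V(H)\to V$ such that $F[\phi(u),\phi(v)]\ge w(u,v)$ for every edge $\{u,v\}\in E(H)$; unit-weighted means all weights are $1$. $\mathsf{inter}_G(H)$ (resp. $\mathsf{inter}^*_G(H)$) is the minimum of $\mathsf{inter}(F)$ over $H$-flows (resp. integral $H$-flows) $F$ in $G$. $\mathsf{inter}_G$ is a $(c,a)$-congestion measure if every unit-weighted graph $H=(V_H,E_H)$ satisfies $\mathsf{inter}_G(H)\ge\frac{|E_H|^3}{c|V_H|^2}-a|V_H|$. *)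

(* Defs.v *)
From HB Require Import structures.
From mathcomp Require Import all_boot all_order all_algebra.
From mathcomp Require Import classical_sets reals ereal.
Set Implicit Arguments. Unset Strict Implicit. Unset Printing Implicit Defensive.
Import Order.TTheory GRing.Theory Num.Theory.
Local Open Scope ring_scope.

(* A finite simple graph is given by a symmetric irreflexive relation [e]
   on a finite vertex type [T].  Its edge set is the set of unordered pairs. *)
Definition edges (T : finType) (e : rel T) : {set {set T}} :=
  [set [set x; y] | x in T, y in T & e x y].

Definition nverts (T : finType) := #|T|.
Definition nedges (T : finType) (e : rel T) := #|edges e|.

Definition uniq_seqs (T : finType) : seq (seq T) :=
  flatten [seq permutations (enum A) | A : {set T}].

Definition is_path (T : finType) (e : rel T) (u v : T) (p : seq T) : bool :=
  match p with
  | [::] => false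
  | x :: q => [&& x == u, last x q == v, path e x q & uniq p]
  end.

(* P_uv : the paths between u and v.  Paths are unoriented; each path between
   u and v is represented by its (unique) orientation from u to v. *)
Definition Puv (T : finType) (e : rel T) (u v : T) : seq (seq T) :=
  [seq p <- uniq_seqs T | is_path e u v p].

Section Flows.
Variables (R : realType) (T : finType) (e : rel T).

(* A flow: a nonnegative function on (unoriented) paths, i.e. a function on
   vertex sequences invariant under reversal. *)
Definition is_flow (F : seq T -> R) : Prop :=
  (forall p, 0 <= F p) /\ (forall p, F (rev p) = F p).

Definition flow_uv (F : seq T -> R) (u v : T) : R :=
  \sum_(p <- Puv e u v) F p.

Definition is_integral (F : seq T -> R) : Prop :=
  forall u v p q, p \in Puv e u v -> q \in Puv e u v ->
    F p != 0 -> F q != 0 -> p = q.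

Definition inter (F : seq T -> R) : R :=
  \sum_(u : T) \sum_(v : T) \sum_(u' : T) \sum_(v' : T)
    (if #|[set u; v; u'; v']| == 4%N then
       \sum_(p <- Puv e u v) \sum_(p' <- Puv e u' v')
         \sum_(x : T | (x \in p) && (x \in p')) F p * F p'
     else 0).

Definition is_Hflow (TH : finType) (eH : rel TH) (F : seq T -> R) : Prop :=
  is_flow F /\
  exists phi : TH -> T, injective phi /\
    forall x y, eH x y -> 1 <= flow_uv F (phi x) (phi y).

(* inter_G(H) and inter*_G(H): infima (+oo if there is no H-flow) *)
Definition interG (TH : finType) (eH : rel TH) : \bar R :=
  ereal_inf [set (inter F)%:E | F in [set F | is_Hflow eH F]]%classic.

Definition interG_star (TH : finType) (eH : rel TH) : \bar R :=
  ereal_inf [set (inter F)%:E | F in [set F | is_Hflow eH F /\ is_integral F]]%classic.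

Definition congestion_measure (c a : R) : Prop :=
  forall (TH : finType) (eH : rel TH), symmetric eH -> irreflexive eH ->
    (((nedges eH)%:R ^+ 3 / (c * (nverts TH)%:R ^+ 2)
      - a * (nverts TH)%:R)%:E <= interG eH)%E.

End Flows.

Arguments interG {R T} e {TH} eH.
Arguments interG_star {R T} e {TH} eH.
Arguments congestion_measure {R T} e c a.

(* Main.v *)
Require Import Defs.
From HB Require Import structures.
From mathcomp Require Import all_boot all_order all_algebra.
From mathcomp Require Import classical_sets reals ereal.
From mathcomp Require Import ring lra.
Import Order.TTheory GRing.Theory Num.Theory.
Local Open Scope ring_scope.

Lemma sum_prod_bool (R : comPzRingType) (X : finType) (h : X -> bool -> R) :
  \sum_(f : {ffun X -> bool}) \prod_x h x (f x) = \prod_x (h x true + h x false).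
Proof.
rewrite -bigA_distr_bigA /=; apply: eq_bigr => x _; by rewrite big_bool.
Qed.

Definition wt (R : comPzRingType) (X : finType) (p : R) (f : {ffun X -> bool}) : R :=
  \prod_x (if f x then p else 1 - p).
Arguments wt {R X}.

Lemma wt_ge0 (R : realDomainType) (X : finType) (p : R) f :
  0 <= p -> p <= 1 -> 0 <= wt p (f : {ffun X -> bool}).
Proof.
move=> p0 p1; apply: prodr_ge0 => x _; case: (f x) => //; by rewrite subr_ge0.
Qed.

Lemma sum_wt (R : comPzRingType) (X : finType) (p : R) :
  \sum_(f : {ffun X -> bool}) wt p f = 1.
Proof.
rewrite /wt (@sum_prod_bool _ _ (fun _ b => if b then p else 1 - p)); apply: big1 => x _; by rewrite addrC subrK.
Qed.

Lemma sub_weight (R : comPzRingType) (X : finType) (p : R) (A : {set X}) :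
  \sum_(f : {ffun X -> bool} | [forall x in A, f x]) wt p f = p ^+ #|A|.
Proof.
rewrite big_mkcond /=.
transitivity (\sum_(f : {ffun X -> bool}) \prod_x
   (fun x b => if b then p else if x \in A then 0 else 1 - p) x (f x)).
  apply: eq_bigr => f _.
  case: (boolP [forall x in A, f x]) => [/forall_inP H | /forall_inPn [x xA fx]].
    apply: eq_bigr => x _; case fx: (f x) => //.
    case xA: (x \in A) => //; by move: (H x xA); rewrite fx.
  by rewrite (bigD1 x) //= (negbTE fx) xA mul0r.
rewrite (@sum_prod_bool _ _ (fun x b => if b then p else if x \in A then 0 else 1 - p)) /=.
rewrite (eq_bigr (fun x => if x \in A then p else 1)); last first.
  move=> x _; case: (x \in A); by rewrite ?addr0 // addrC subrK.
by rewrite -big_mkcond prodr_const.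
Qed.

Lemma sum_if (R : comPzRingType) (J : finType) (w : J -> R) (P : pred J) (y : R) :
  \sum_j w j * (if P j then y else 0) = y * \sum_(j | P j) w j.
Proof.
rewrite mulr_sumr [RHS]big_mkcond; apply: eq_bigr => j _; case: (P j);
by rewrite ?mulr0 // mulrC.
Qed.

Lemma sum_swap_le (R : realDomainType) (I J : finType) (w : J -> R) (G : J -> I -> R) (B : I -> R) :
  (forall i, \sum_j w j * G j i <= B i) -> \sum_j w j * \sum_i G j i <= \sum_i B i.
Proof.
move=> H; rewrite (eq_bigr (fun j => \sum_i w j * G j i)); last by move=> j _; rewrite mulr_sumr.
rewrite exchange_big; apply: ler_sum => i _; exact: H.
Qed.

Lemma nedges_le (T : finType) (e : rel T) : (nedges e <= #|T| * #|T|)%N.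
Proof.
rewrite /nedges -card_prod -cardsT.
apply: (leq_trans _ (leq_imset_card (fun u : T * T => [set u.1; u.2]) [set: T * T])).
apply: subset_leq_card; apply/fintype.subsetP => E /imset2P [x y _ _ ->].
by apply/finset.imsetP; exists (x, y).
Qed.

Lemma alg (R : realFieldType) (k m n I : R) : 0 < k -> 0 < n -> 0 < m ->
  m <= n ^+ 2 -> 3 * k * n <= m -> 0 <= I ->
  (3 * k * n / m) ^+ 2 * m - k * (3 * k * n / m) * n - k ^+ 2 <= (3 * k * n / m) ^+ 4 * I ->
  1 / 27 * (m ^+ 3 / (k ^+ 2 * n ^+ 2)) - k * n <= I.
Proof.
move=> k0 n0 m0 mn km I0 H.
set q := 3 * k * n / m in H.
have q0 : 0 < q by rewrite /q divr_gt0 // mulr_gt0 // mulr_gt0.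
have q40 : 0 < q ^+ 4 by rewrite exprn_gt0.
rewrite -(ler_pM2l q40).
have mn0 : m != 0 by rewrite gt_eqF.
have k0' : k != 0 by rewrite gt_eqF.
have n0' : n != 0 by rewrite gt_eqF.
set s := m^-1.
have E1 : q ^+ 4 * (1 / 27 * (m ^+ 3 / (k ^+ 2 * n ^+ 2)) - k * n)
   = 3 * k^+2 * n^+2 * s - 81 * k^+5 * n^+5 * s^+4.
  rewrite /q /s; field; by rewrite mn0 k0' n0'.
have E2 : q ^+ 2 * m - k * q * n - k ^+ 2 = 6 * k^+2 * n^+2 * s - k^+2.
  rewrite /q /s; field; by rewrite mn0.
rewrite E1; rewrite E2 in H; apply: le_trans H.
have s0 : 0 < s by rewrite invr_gt0.
have ns : 1 <= n ^+ 2 * s.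
  by rewrite /s -(ler_pM2r m0) mul1r -mulrA mulVf // mulr1.
have h1 : k ^+ 2 <= k ^+ 2 * (n ^+ 2 * s).
  by rewrite ler_peMr // sqr_ge0.
have h2 : 0 <= k ^+ 5 * n ^+ 5 * s ^+ 4.
  by rewrite !mulr_ge0 // ?exprn_ge0 // ltW.
have h3 : 0 <= k ^+ 2 * n ^+ 2 * s.
  by rewrite !mulr_ge0 // ?exprn_ge0 // ltW.
nra.
Qed.

Section Key.
Variables (R : realType) (T : finType) (e : rel T) (k : R).
Hypothesis hyp : forall (TH : finType) (eH : rel TH), symmetric eH -> irreflexive eH ->
     (((nedges eH)%:R - k * (nverts TH)%:R - k ^+ 2)%:E <= interG e eH)%E.
Variables (TH : finType) (eH : rel TH) (eH_sym : symmetric eH) (eH_irr : irreflexive eH).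
Variables (F : seq T -> R) (F0 : forall q, 0 <= F q) (Frev : forall q, F (rev q) = F q).
Variables (phi : TH -> T) (phiinj : injective phi)
  (Hphi : forall x y, eH x y -> 1 <= flow_uv e F (phi x) (phi y)).

Definition inS (f : {ffun TH -> bool}) (t : T) := [exists a, f a && (phi a == t)].
Definition ends f (q : seq T) := if q is x :: r then inS f x && inS f (last x r) else false.
Definition Ff f q := if ends f q then F q else 0.

Lemma inSphi f a : inS f (phi a) = f a.
Proof.
apply/existsP/idP => [[a0 /andP [fa0 /eqP /phiinj <-]] // | fa]; by exists a; rewrite fa eqxx.
Qed.

Lemma endsP f u v q : q \in Puv e u v -> ends f q = inS f u && inS f v.
Proof.
case: q => [|x r]; rewrite mem_filter //= => /andP [/and4P [/eqP -> /eqP -> _ _] _] //.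
Qed.

Lemma endsrev f q : ends f (rev q) = ends f q.
Proof.
case/lastP: q => [|r y] //; rewrite rev_rcons; case: r => [|x r] //=.
by rewrite rev_cons !last_rcons andbC.
Qed.

Definition mf (f : {ffun TH -> bool}) := #|[set E in edges eH | [forall x in E, f x]]|.

Lemma Hf f : (mf f)%:R - k * (#|[pred x | f x]|)%:R - k ^+ 2 <= inter e (Ff f).
Proof.
pose TH' := {x : TH | f x}.
pose eH' : rel TH' := fun x y => eH (val x) (val y).
have sym' : symmetric eH' by move=> x y; exact: eH_sym.
have irr' : irreflexive eH' by move=> x; exact: eH_irr.
have := @hyp TH' eH' sym' irr'.
have Hfl : is_Hflow e eH' (Ff f).
  split; first split.
  - by move=> q; rewrite /Ff; case: ifP.
  - by move=> q; rewrite /Ff endsrev Frev.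
  exists (fun x => phi (val x)); split; first by move=> x y /phiinj /val_inj.
  move=> x y exy; rewrite /flow_uv (eq_big_seq F) ?Hphi // => q Hq.
  by rewrite /Ff (@endsP f _ _ _ Hq) !inSphi (valP x) (valP y).
have Hle : (interG e eH' <= (inter e (Ff f))%:E)%E.
  by apply: ereal_inf_lbound; exists (Ff f).
move=> /le_trans /(_ Hle); rewrite lee_fin; apply: le_trans.
rewrite /nverts card_sig lerD2r lerD2r; rewrite ler_nat.
pose g := fun E : {set TH} => [set x : TH' | val x \in E].
rewrite /mf /nedges -(card_in_imset (f:=g)).
  apply: subset_leq_card; apply/fintype.subsetP => E0 /finset.imsetP [E].
  rewrite inE => /andP [/imset2P [x y _ exy ->] /forall_inP H] HE0; rewrite HE0.
  have fx : f x := H x (set21 x y).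
  have fy : f y := H y (set22 x y).
  apply/imset2P; apply: (@Imset2spec _ _ _ _ _ _ _ (exist _ x fx) (exist _ y fy)).
  - by [].
  - by move: exy; rewrite !inE.
  apply/setP => z; rewrite !inE -!(inj_eq val_inj) //.
move=> E1 E2; rewrite !inE => /andP [_ /forall_inP H1] /andP [_ /forall_inP H2] Heq.
apply/setP => z; case fz: (f z).
  by move/setP/(_ (exist _ z fz)): Heq; rewrite !inE.
have n1 : z \notin E1 by apply/negP => /H1; rewrite fz.
have n2 : z \notin E2 by apply/negP => /H2; rewrite fz.
by rewrite (negbTE n1) (negbTE n2).
Qed.

Definition Tq u v u' v' :=
  if #|[set u; v; u'; v']| == 4%N then
    \sum_(p <- Puv e u v) \sum_(p' <- Puv e u' v')
      \sum_(x : T | (x \in p) && (x \in p')) F p * F p'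
  else 0.

Lemma inter_Ff f : inter e (Ff f) = \sum_u \sum_v \sum_u' \sum_v'
  (if [&& inS f u, inS f v, inS f u' & inS f v'] then Tq u v u' v' else 0).
Proof.
rewrite /inter; apply: eq_bigr => u _; apply: eq_bigr => v _.
apply: eq_bigr => u' _; apply: eq_bigr => v' _.
rewrite /Tq; case: ifP => _; last by case: ifP.
transitivity (\sum_(q <- Puv e u v) \sum_(q' <- Puv e u' v')
   \sum_(x : T | (x \in q) && (x \in q'))
   (if inS f u && inS f v then F q else 0) * (if inS f u' && inS f v' then F q' else 0)).
  apply: eq_big_seq => q Hq; apply: eq_big_seq => q' Hq'; apply: eq_bigr => x _.
  by rewrite /Ff (@endsP f _ _ _ Hq) (@endsP f _ _ _ Hq').
case: (inS f u); case: (inS f v); case: (inS f u'); case: (inS f v') => //=;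
rewrite big1 // => q _; rewrite big1 // => q' _; rewrite big1 // => x _;
by rewrite ?mulr0 ?mul0r.
Qed.

Lemma Tq_ge0 u v u' v' : 0 <= Tq u v u' v'.
Proof.
rewrite /Tq; case: ifP => // _; apply: sumr_ge0 => q _; apply: sumr_ge0 => q' _.
by apply: sumr_ge0 => x _; rewrite mulr_ge0.
Qed.

Lemma quad_bound (p : R) u v u' v' : 0 <= p ->
  \sum_f wt p f * (if [&& inS f u, inS f v, inS f u' & inS f v'] then Tq u v u' v' else 0)
  <= p ^+ 4 * Tq u v u' v'.
Proof.
move=> p0; rewrite sum_if.
case: (boolP [&& [exists a, phi a == u], [exists a, phi a == v],
                [exists a, phi a == u'] & [exists a, phi a == v']]).
  case/and4P => /existsP [a /eqP <-] /existsP [b /eqP <-] /existsP [a' /eqP <-] /existsP [b' /eqP <-].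
  rewrite /Tq; case: ifP => H4; last by rewrite mul0r mulr0.
  rewrite (eq_bigl (fun f : {ffun TH -> bool} => [forall x in [set a; b; a'; b'], f x])); last first.
    move=> f; rewrite !inSphi; apply/and4P/forall_inP => [[fa fb fa' fb'] x | H].
      by rewrite !inE => /orP [/orP [/orP [/eqP -> | /eqP ->] | /eqP ->] | /eqP ->].
    by split; apply: H; rewrite !inE eqxx ?orbT.
  rewrite sub_weight.
  have -> : #|[set a; b; a'; b']| = 4%N.
    by rewrite -(card_imset _ phiinj) !imsetU !imset_set1; apply/eqP.
  by rewrite mulrC.
move=> Hn; rewrite big_pred0 ?mulr0; first by rewrite mulr_ge0 ?exprn_ge0 ?Tq_ge0.
move=> f; apply/negbTE; apply: contra Hn => /and4P [H1 H2 H3 H4].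
apply/and4P; split.
- by case/existsP: H1 => a /andP [_ Ha]; apply/existsP; exists a.
- by case/existsP: H2 => a /andP [_ Ha]; apply/existsP; exists a.
- by case/existsP: H3 => a /andP [_ Ha]; apply/existsP; exists a.
- by case/existsP: H4 => a /andP [_ Ha]; apply/existsP; exists a.
Qed.

Lemma key (p : R) : 0 <= p -> p <= 1 ->
  p ^+ 2 * (nedges eH)%:R - k * p * (nverts TH)%:R - k ^+ 2 <= p ^+ 4 * inter e F.
Proof.
move=> p0 p1.
have S0 := @sum_wt R TH p.
have S1 : \sum_f wt p f * (mf f)%:R = p ^+ 2 * (nedges eH)%:R.
  transitivity (\sum_(f : {ffun TH -> bool}) wt p f *
      \sum_(E in edges eH) (if [forall x in E, f x] then 1 else 0)).
    apply: eq_bigr => f _; congr (_ * _).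
    rewrite -big_mkcondr sumr_const; congr (_ *+ _); apply: eq_card => E; by rewrite inE.
  rewrite (eq_bigr (fun f => \sum_(E in edges eH) wt p f *
      (if [forall x in E, f x] then 1 else 0))); last by move=> f _; rewrite mulr_sumr.
  rewrite exchange_big /= (eq_bigr (fun _ => p ^+ 2)).
    by rewrite sumr_const mulr_natr.
  move=> E /imset2P [x y _ exy ->].
  rewrite sum_if mul1r sub_weight cards2.
  suff -> : x != y by [].
  apply/eqP => xy; move: exy; by rewrite inE xy eH_irr.
have S2 : \sum_(f : {ffun TH -> bool}) wt p f * (#|[pred x | f x]|)%:R = p * (nverts TH)%:R.
  transitivity (\sum_(f : {ffun TH -> bool}) wt p f *
      \sum_(x : TH) (if f x then 1 else 0)).
    apply eq_bigr; move=> f _; congr (_ * _).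
    by rewrite -big_mkcond sumr_const.
  rewrite (eq_bigr (fun f => \sum_(x : TH) wt p f *
      (if f x then 1 else 0))); last by move=> f _; rewrite mulr_sumr.
  rewrite exchange_big /= (eq_bigr (fun _ => p)).
    by rewrite sumr_const mulr_natr.
  move=> x _; rewrite sum_if mul1r.
  rewrite (eq_bigl (fun f : {ffun TH -> bool} => [forall y in [set x], f y])).
    by rewrite sub_weight cards1.
  move=> f; apply/idP/forall_inP => [fx y | H]; last by apply: H; rewrite inE.
  by rewrite inE => /eqP ->.
have L : \sum_f wt p f * ((mf f)%:R - k * (#|[pred x | f x]|)%:R - k ^+ 2)
   <= \sum_f wt p f * inter e (Ff f).
  by apply: ler_sum => f _; apply: ler_wpM2l; [exact: wt_ge0 | exact: Hf].
have U : \sum_f wt p f * inter e (Ff f) <= p ^+ 4 * inter e F.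
  rewrite (eq_bigr (fun f => wt p f * \sum_u \sum_v \sum_u' \sum_v'
   (if [&& inS f u, inS f v, inS f u' & inS f v'] then Tq u v u' v' else 0)));
   last by move=> f _; rewrite inter_Ff.
  have -> : p ^+ 4 * inter e F = \sum_u \sum_v \sum_u' \sum_v' p ^+ 4 * Tq u v u' v'.
    rewrite /inter mulr_sumr; apply: eq_bigr => u _; rewrite mulr_sumr.
    apply: eq_bigr => v _; rewrite mulr_sumr; apply: eq_bigr => u' _; by rewrite mulr_sumr.
  apply: sum_swap_le => u; apply: sum_swap_le => v; apply: sum_swap_le => u'.
  apply: sum_swap_le => v'; exact: quad_bound.
have := le_trans L U.
have -> : \sum_f wt p f * ((mf f)%:R - k * (#|[pred x | f x]|)%:R - k ^+ 2)
   = \sum_f wt p f * (mf f)%:R - k * \sum_(f : {ffun TH -> bool}) wt p f * (#|[pred x | f x]|)%:R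
     - k ^+ 2 * \sum_(f : {ffun TH -> bool}) wt p f.
  rewrite !mulr_sumr -!sumrB; apply: eq_bigr => f _; ring.
by rewrite S0 S1 S2 mulr1 mulrA.
Qed.

End Key.

Theorem lemma3p5 (R : realType) (T : finType) (e : rel T)
  (e_sym : symmetric e) (e_irr : irreflexive e) (k : R) (k_gt0 : 0 < k)
  (hyp : forall (TH : finType) (eH : rel TH), symmetric eH -> irreflexive eH ->
     interG_star (R:=R) e eH = interG e eH /\
     (((nedges eH)%:R - k * (nverts TH)%:R - k ^+ 2)%:E <= interG e eH)%E) :
  (forall (TH : finType) (eH : rel TH), symmetric eH -> irreflexive eH ->
     ((1 / 27 * ((nedges eH)%:R ^+ 3 / (k ^+ 2 * (nverts TH)%:R ^+ 2))
       - k * (nverts TH)%:R)%:E <= interG e eH)%E)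
  /\ congestion_measure e (27 * k ^+ 2) k.
Proof.
have hyp2 : forall (TH : finType) (eH : rel TH), symmetric eH -> irreflexive eH ->
     (((nedges eH)%:R - k * (nverts TH)%:R - k ^+ 2)%:E <= interG e eH)%E.
  by move=> TH eH hs hi; case: (hyp TH eH hs hi).
have part1 : forall (TH : finType) (eH : rel TH), symmetric eH -> irreflexive eH ->
     ((1 / 27 * ((nedges eH)%:R ^+ 3 / (k ^+ 2 * (nverts TH)%:R ^+ 2))
       - k * (nverts TH)%:R)%:E <= interG e eH)%E.
  move=> TH eH hs hi.
  apply/ereal_infP => _ [F [[F0 Frev] [phi [phiinj Hphi]]] <-].
  rewrite lee_fin.
  set m : R := (nedges eH)%:R; set n : R := (nverts TH)%:R.
  have I0 : 0 <= inter e F.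
    apply: sumr_ge0 => u _; apply: sumr_ge0 => v _; apply: sumr_ge0 => u' _.
    apply: sumr_ge0 => v' _.
    case: ifP => // _; apply: sumr_ge0 => q _; apply: sumr_ge0 => q' _.
    by apply: sumr_ge0 => x _; rewrite mulr_ge0.
  have m0 : 0 <= m by rewrite /m ler0n.
  have n0 : 0 <= n by rewrite /n ler0n.
  have mn : m <= n ^+ 2.
    by rewrite /m /n -natrX ler_nat expnS expn1 nedges_le.
  case: (leP (1 / 27 * (m ^+ 3 / (k ^+ 2 * n ^+ 2)) - k * n) 0) => [H0|Hpos].
    exact: le_trans H0 I0.
  have npos : 0 < n.
    rewrite lt_neqAle n0 andbT; apply/negP => /eqP n0'.
    by move: Hpos; rewrite -n0' expr0n /= mulr0 invr0 !mulr0 subr0 ltxx.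
  have [km|km] := leP (3 * k * n) m; last first.
    exfalso; move: Hpos; apply/negP; rewrite -leNgt.
    have E : 1 / 27 * (m ^+ 3 / (k ^+ 2 * n ^+ 2)) - k * n
       = (m ^+ 3 - (3 * k * n) ^+ 3) / (27 * k ^+ 2 * n ^+ 2).
      field; rewrite gt_eqF ?gt_eqF //.
    rewrite E; apply: mulr_le0_ge0; last first.
      by rewrite invr_ge0 !mulr_ge0 // ?sqr_ge0 // ltW.
    rewrite subr_le0 !exprS !expr0 !mulr1.
    have k3 : 0 <= 3 * k * n by rewrite mulr_ge0 // mulr_ge0 // ltW.
    by rewrite ler_pM // ?mulr_ge0 // ?ler_pM // ltW.
  have mpos : 0 < m.
    apply: lt_le_trans km; by rewrite mulr_gt0 // mulr_gt0.
  apply: (@alg _ k m n (inter e F) k_gt0 npos mpos mn km I0).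
  apply: (@key R T e k hyp2 TH eH hs hi F F0 Frev phi phiinj Hphi).
    by apply: divr_ge0 => //; rewrite mulr_ge0 // mulr_ge0 // ltW.
  by rewrite ler_pdivrMr // mul1r.
split => //.
move=> TH eH hs hi; have := part1 TH eH hs hi.
suff -> : (nedges eH)%:R ^+ 3 / (27 * k ^+ 2 * (nverts TH)%:R ^+ 2)
   = 1 / 27 * ((nedges eH)%:R ^+ 3 / (k ^+ 2 * (nverts TH)%:R ^+ 2)) :> R by [].
by rewrite !invfM; ring.
Qed.
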